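(* Let $a\in\omega\setminus\{0\}$ and $h(n)=2^{(a^n)}$. Then $\mathrm{IOE}(h)\ge_S\mathcal D(1/a)$ and $\mathrm{AED}(h)\le_S\mathcal B(1/a)$.
   Context: A mass problem is a nonempty set of functions $\omega\to\omega$. $\mathcal B\le_S\mathcal C$ (equivalently $\mathcal C\ge_S\mathcal B$) means there is a Turing functional $\Phi$ with $\Phi^g\in\mathcal B$ for all $g\in\mathcal C$. For bit sequences $x,y$, $x\leftrightarrow y=\{n:x(n)=y(n)\}$; for $Z\subseteq\omega$, $\underline\rho(Z)=\liminf_n|Z\cap[0,n)|/n$. $\mathcal D(p)$ is the set of bit sequences $y$ with $\underline\rho(x\leftrightarrow y)\le p$ for every computable bit sequence $x$; $\mathcal B(p)$ is the set of bit sequences $y$ with $\underline\rho(x\leftrightarrow y)>p$ for every computable bit sequence $x$. $\mathrm{IOE}(h)$ is the set of functions $y:\omega\to\omega$ such that every computable $x$ with $x(n)<h(n)$ for all $n$ satisfies $x(n)=y(n)$ for infinitely many $n$; $\mathrm{AED}(h)$ is the set of functions $y$ with $y(n)<h(n)$ for all $n$ such that every computable $x$ satisfies $x(n)\neq y(n)$ for all but finitely many $n$. *)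

(* Defs.v *)
From HB Require Import structures.
From mathcomp Require Import all_boot all_order all_algebra.
From mathcomp Require Import all_classical all_reals.
From mathcomp Require Import topology normedtype sequences.
From mathcomp Require Import Rstruct Rstruct_topology.
From Stdlib Require Import Cantor.
Set Implicit Arguments. Unset Strict Implicit. Unset Printing Implicit Defensive.
Import Order.TTheory GRing.Theory Num.Theory.

(* Oracle (relative) partial recursive functionals, in the standard    *)

Definition pairn (x y : nat) : nat := Cantor.to_nat (x, y).
Definition fstn (n : nat) : nat := (Cantor.of_nat n).1.
Definition sndn (n : nat) : nat := (Cantor.of_nat n).2.

Inductive code : Type :=
| CZero
| CSucc
| CId
| CFst
| CSnd
| COracle
| CComp (f h : code)
| CPair (f h : code)
| CRec (f h : code)
| CMu (f : code).

Inductive eval (g : nat -> nat) : code -> nat -> nat -> Prop :=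
| ev_zero x : eval g CZero x 0
| ev_succ x : eval g CSucc x x.+1
| ev_id x : eval g CId x x
| ev_fst x : eval g CFst x (fstn x)
| ev_snd x : eval g CSnd x (sndn x)
| ev_oracle x : eval g COracle x (g x)
| ev_comp f h x y z : eval g h x y -> eval g f y z -> eval g (CComp f h) x z
| ev_pair f h x y z : eval g f x y -> eval g h x z -> eval g (CPair f h) x (pairn y z)
| ev_rec0 f h x y : eval g f x y -> eval g (CRec f h) (pairn x 0) y
| ev_recS f h x n r y : eval g (CRec f h) (pairn x n) r ->
    eval g h (pairn x (pairn n r)) y -> eval g (CRec f h) (pairn x n.+1) y
| ev_mu f x n :
    eval g f (pairn x n) 0 ->
    (forall m, m < n -> exists k, eval g f (pairn x m) k.+1) ->
    eval g (CMu f) x n.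

Definition tf_apply (c : code) (g : nat -> nat) (y : nat -> nat) : Prop :=
  forall n, eval g c n (y n).

Definition mass := (nat -> nat) -> Prop.

Definition strong_le (B C : mass) : Prop :=
  exists c : code, forall g, C g -> exists y, tf_apply c g y /\ B y.

(* computable total functions: computed by some functional (oracle irrelevant,
   fixed to the constant-0 oracle). *)
Definition computable (x : nat -> nat) : Prop :=
  exists c : code, tf_apply c (fun _ => 0) x.

Definition bitseq_fun (x : nat -> nat) : Prop := forall n, x n < 2.

Definition agree (x y : nat -> nat) : nat -> bool := fun n => x n == y n.

Local Open Scope ring_scope.
Definition lower_density (Z : nat -> bool) : \bar Rdefinitions.R :=
  limn_einf (fun n : nat => ((count Z (iota 0 n))%:R / n%:R : Rdefinitions.R)%:E).

Definition massD (p : Rdefinitions.R) : mass := fun y =>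
  bitseq_fun y /\
  forall x, computable x -> bitseq_fun x -> (lower_density (agree x y) <= p%:E)%E.

Definition massB (p : Rdefinitions.R) : mass := fun y =>
  bitseq_fun y /\
  forall x, computable x -> bitseq_fun x -> (p%:E < lower_density (agree x y))%E.
Local Close Scope ring_scope.

Definition IOE (h : nat -> nat) : mass := fun y =>
  forall x, computable x -> (forall n, x n < h n) ->
    forall N, exists n, N <= n /\ x n = y n.

Definition AED (h : nat -> nat) : mass := fun y =>
  (forall n, y n < h n) /\
  forall x, computable x -> exists N, forall n, N <= n -> x n <> y n.

(* Main.v *)
Require Import Defs.
From HB Require Import structures.
From mathcomp Require Import all_boot all_order all_algebra.
From mathcomp Require Import all_classical all_reals.
From Stdlib Require Import Cantor.
Import Order.TTheory GRing.Theory Num.Theory.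

From mathcomp Require Import zify.

Lemma fst_pair x y : fstn (pairn x y) = x.
Proof. by rewrite /fstn /pairn Cantor.cancel_of_to. Qed.
Lemma snd_pair x y : sndn (pairn x y) = y.
Proof. by rewrite /sndn /pairn Cantor.cancel_of_to. Qed.
Lemma pair_surj p : pairn (fstn p) (sndn p) = p.
Proof. by rewrite /fstn /sndn /pairn -surjective_pairing Cantor.cancel_to_of. Qed.

Fixpoint recf (B : nat -> nat) (S : nat -> nat) (x n : nat) : nat :=
  match n with 0 => B x | n'.+1 => S (pairn x (pairn n' (recf B S x n'))) end.

Fixpoint den (g : nat -> nat) (c : Defs.code) (x : nat) : nat :=
  match c with
  | CZero => 0 | CSucc => x.+1 | CId => x | CFst => fstn x | CSnd => sndn x
  | COracle => g x
  | CComp f h => den g f (den g h x)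
  | CPair f h => pairn (den g f x) (den g h x)
  | CRec f h => recf (den g f) (den g h) (fstn x) (sndn x)
  | CMu _ => 0
  end.

Fixpoint mu_free (c : Defs.code) : bool :=
  match c with
  | CComp f h | CPair f h | CRec f h => mu_free f && mu_free h
  | CMu _ => false
  | _ => true
  end.

Lemma den_eval g c x : mu_free c -> eval g c x (den g c x).
Proof.
elim: c x => //=; try by constructor.
- move=> f IHf h IHh x /andP[hf hh]; econstructor; eauto.
- move=> f IHf h IHh x /andP[hf hh]; econstructor; eauto.
- move=> f IHf h IHh x /andP[hf hh].
  rewrite -{1}(pair_surj x); elim: (sndn x) => [|n IH] /=.
  + by constructor; apply: IHf.
  + by econstructor; [exact: IH| apply: IHh].
Qed.

Fixpoint osub (c cx : Defs.code) : Defs.code :=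
  match c with
  | COracle => cx
  | CComp f h => CComp (osub f cx) (osub h cx)
  | CPair f h => CPair (osub f cx) (osub h cx)
  | CRec f h => CRec (osub f cx) (osub h cx)
  | CMu f => CMu (osub f cx)
  | c => c
  end.

Lemma osub_eval g0 cx x c v :
  (forall n, eval g0 cx n (x n)) -> mu_free c -> eval g0 (osub c cx) v (den x c v).
Proof.
move=> hx; elim: c v => //=; try by constructor.
- move=> f IHf h IHh v /andP[hf hh]; econstructor; eauto.
- move=> f IHf h IHh v /andP[hf hh]; econstructor; eauto.
- move=> f IHf h IHh v /andP[hf hh].
  rewrite -{1}(pair_surj v); elim: (sndn v) => [|n IH] /=.
  + by constructor; apply: IHf.
  + by econstructor; [exact: IH| apply: IHh].
Qed.

Definition X_ := CFst.
Definition I_ := CComp CFst CSnd.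
Definition R_ := CComp CSnd CSnd.
Definition crec b s cx cn := CComp (CRec b s) (CPair cx cn).
Arguments X_ : simpl never. Arguments I_ : simpl never. Arguments R_ : simpl never.
Arguments crec : simpl never.

Lemma den_X g x n r : den g X_ (pairn x (pairn n r)) = x.
Proof. by rewrite /X_ /= fst_pair. Qed.
Lemma den_I g x n r : den g I_ (pairn x (pairn n r)) = n.
Proof. by rewrite /I_ /= snd_pair fst_pair. Qed.
Lemma den_R g x n r : den g R_ (pairn x (pairn n r)) = r.
Proof. by rewrite /R_ /= !snd_pair. Qed.
Lemma den_crec g b s cx cn x :
  den g (crec b s cx cn) x = recf (den g b) (den g s) (den g cx x) (den g cn x).
Proof. by rewrite /crec /= fst_pair snd_pair. Qed.
Lemma recfS B S x n : recf B S x n.+1 = S (pairn x (pairn n (recf B S x n))).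
Proof. by []. Qed.
Lemma recf0 B S x : recf B S x 0 = B x.
Proof. by []. Qed.
Lemma mf_crec b s cx cn : mu_free (crec b s cx cn) = [&& mu_free b, mu_free s, mu_free cx & mu_free cn].
Proof. by rewrite /crec /= !andbA. Qed.

Fixpoint cconst k := match k with 0 => CZero | k'.+1 => CComp CSucc (cconst k') end.
Lemma den_const g k x : den g (cconst k) x = k.
Proof. by elim: k => //= k ->. Qed.
Lemma mf_const k : mu_free (cconst k).
Proof. by elim: k. Qed.

Lemma den_comp g f h x : den g (CComp f h) x = den g f (den g h x).
Proof. by []. Qed.
Ltac dsimp := rewrite ?den_crec ?recf0 ?recfS /= ?den_X ?den_I ?den_R ?den_const.

Definition cadd c1 c2 := crec CId (CComp CSucc R_) c1 c2.
Arguments cadd : simpl never.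
Lemma den_add g c1 c2 x : den g (cadd c1 c2) x = den g c1 x + den g c2 x.
Proof.
rewrite /cadd den_crec; elim: (den g c2 x) => [|n IH]; first by rewrite addn0.
by rewrite recfS den_comp den_R IH addnS.
Qed.
Definition cpred c := crec CZero I_ CZero c.
Arguments cpred : simpl never.
Lemma den_pred g c x : den g (cpred c) x = (den g c x).-1.
Proof. by rewrite /cpred den_crec; case: (den g c x) => [|n] //; rewrite recfS den_I. Qed.
Definition csub c1 c2 := crec CId (cpred R_) c1 c2.
Arguments csub : simpl never.
Lemma den_sub g c1 c2 x : den g (csub c1 c2) x = den g c1 x - den g c2 x.
Proof.
rewrite /csub den_crec; elim: (den g c2 x) => [|n IH]; first by rewrite subn0.
by rewrite recfS den_pred den_R IH subnS.
Qed.
Definition cmul c1 c2 := crec CZero (cadd R_ X_) c1 c2.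
Arguments cmul : simpl never.
Lemma den_mul g c1 c2 x : den g (cmul c1 c2) x = den g c1 x * den g c2 x.
Proof.
rewrite /cmul den_crec; elim: (den g c2 x) => [|n IH]; first by rewrite muln0.
by rewrite recfS den_add den_R den_X IH mulnS addnC.
Qed.
Definition cpow c1 c2 := crec (cconst 1) (cmul R_ X_) c1 c2.
Arguments cpow : simpl never.
Lemma den_pow g c1 c2 x : den g (cpow c1 c2) x = den g c1 x ^ den g c2 x.
Proof.
rewrite /cpow den_crec; elim: (den g c2 x) => [|n IH]; first by rewrite recf0 den_const expn0.
by rewrite recfS den_mul den_R den_X IH expnS mulnC.
Qed.
Definition codd c := crec CZero (csub (cconst 1) R_) CZero c.
Arguments codd : simpl never.
Lemma den_odd g c x : den g (codd c) x = odd (den g c x).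
Proof.
rewrite /codd den_crec; elim: (den g c x) => [|n IH] //.
rewrite recfS den_sub den_R den_const IH /=; by case: (odd n).
Qed.
Definition chalf c := crec CZero (cadd R_ (codd I_)) CZero c.
Arguments chalf : simpl never.
Lemma den_half g c x : den g (chalf c) x = (den g c x)./2.
Proof.
rewrite /chalf den_crec; elim: (den g c x) => [|n IH] //.
by rewrite recfS den_add den_odd den_R den_I IH /= uphalf_half addnC.
Qed.
Definition cdiv2 cv ci := crec CId (chalf R_) cv ci.
Arguments cdiv2 : simpl never.
Lemma den_div2 g cv ci x : den g (cdiv2 cv ci) x = den g cv x %/ 2 ^ den g ci x.
Proof.
rewrite /cdiv2 den_crec; elim: (den g ci x) => [|n IH]; first by rewrite divn1.
by rewrite recfS den_half den_R IH -divn2 expnS mulnC divnMA.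
Qed.

Fixpoint sa (a n : nat) : nat := if n is n'.+1 then sa a n' + a ^ n' else 0.
Definition cS a := crec CZero (cadd R_ (cpow (cconst a) I_)) CZero CId.
Arguments cS : simpl never.
Lemma den_S g a n : den g (cS a) n = sa a n.
Proof.
rewrite /cS den_crec [den g CId _]/= [den g CZero _]/=; elim: n => [|n IH] //.
by rewrite recfS den_add den_pow den_R den_I den_const IH.
Qed.

Fixpoint encf (g : nat -> nat) (st L : nat) : nat :=
  if L is L'.+1 then encf g st L' + g (st + L') * 2 ^ L' else 0.
Definition cPhi2 a :=
  crec CZero (cadd R_ (cmul (CComp COracle (cadd (CComp (cS a) X_) I_)) (cpow (cconst 2) I_)))
    CId (cpow (cconst a) CId).
Lemma den_Phi2 g a n : den g (cPhi2 a) n = encf g (sa a n) (a ^ n).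
Proof.
rewrite /cPhi2 den_crec den_pow den_const [den g CId _]/=; elim: (a ^ n) => [|L IH] //.
by rewrite recfS den_add den_mul den_pow den_comp den_add den_comp den_S den_R den_X den_I den_const IH.
Qed.

Fixpoint cntf (a m N : nat) : nat :=
  if N is N'.+1 then cntf a m N' + (1 - (sa a N'.+1 - m)) else 0.
Definition cblk a :=
  crec CZero (cadd R_ (csub (cconst 1) (csub (CComp (cS a) (CComp CSucc I_)) X_))) CId (CComp CSucc CId).
Arguments cblk : simpl never.
Lemma den_blk g a m : den g (cblk a) m = cntf a m m.+1.
Proof.
rewrite /cblk den_crec [den g (CComp CSucc CId) _]/= [den g CId _]/=; elim: m.+1 => [|N IH] //.
by rewrite recfS den_add !den_sub den_R den_X den_const den_comp den_S den_comp den_I IH.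
Qed.

Definition cPhi1 a :=
  csub (cconst 1) (codd (cdiv2 (CComp COracle (cblk a)) (csub CId (CComp (cS a) (cblk a))))).
Lemma den_Phi1 g a m : den g (cPhi1 a) m =
  1 - odd (g (cntf a m m.+1) %/ 2 ^ (m - sa a (cntf a m m.+1))).
Proof.
by rewrite /cPhi1 den_sub den_odd den_div2 den_sub den_const (den_comp g COracle) (den_comp g (cS a)) den_S den_blk.
Qed.

Lemma mf_Phi1 a : mu_free (cPhi1 a).
Proof. by rewrite /cPhi1 /cblk /cS /cdiv2 /chalf /codd /csub /cpred /cadd /cmul /cpow /crec /X_ /I_ /R_ /= !mf_const. Qed.
Lemma mf_Phi2 a : mu_free (cPhi2 a).
Proof. by rewrite /cPhi2 /cblk /cS /cdiv2 /chalf /codd /csub /cpred /cadd /cmul /cpow /crec /X_ /I_ /R_ /= !mf_const. Qed.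


Lemma enc_bound g st L : (forall j, g j < 2) -> encf g st L < 2 ^ L.
Proof.
move=> hg; elim: L => [|L IH] //=.
rewrite expnS mul2n -addnn.
have := hg (st + L); case: (g (st + L)) => [|[|//]] _.
- by rewrite mul0n addn0 ltn_addr.
- by rewrite mul1n ltn_add2r.
Qed.

Lemma enc_bit g st L i : (forall j, g j < 2) -> i < L ->
  nat_of_bool (odd (encf g st L %/ 2 ^ i)) = g (st + i).
Proof.
move=> hg; elim: L => [|L IH] // hi /=.
have e2 : 0 < 2 ^ i by rewrite expn_gt0.
case: (ltngtP i L) => [iL|iL|iL].
- have eL : 2 ^ L = 2 ^ (L - i) * 2 ^ i by rewrite -expnD subnK // ltnW.
  rewrite eL mulnA divnDr ?dvdn_mull // mulnK //.
  rewrite oddD oddM oddX /=.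
  have -> : (L - i == 0) = false by apply/negbTE; rewrite subn_eq0 -ltnNge.
  by rewrite andbF addbF IH.
- by move: hi; rewrite ltnS leqNgt iL.
- subst i; rewrite addnC divnMDl // divn_small ?enc_bound // addn0.
  by have := hg (st + L); case: (g (st + L)) => [|[|//]].
Qed.

Lemma sa_mono a k l : k <= l -> sa a k <= sa a l.
Proof.
move=> /subnKC <-; elim: (l - k) => [|d IH]; first by rewrite addn0.
by rewrite addnS /= (leq_trans IH) // leq_addr.
Qed.

Lemma sa_ge a n : 0 < a -> n <= sa a n.
Proof.
move=> ha; elim: n => [|n IH] //=.
by rewrite -addn1 leq_add // expn_gt0 ha.
Qed.

Lemma saS a n : a * sa a n + 1 = sa a n.+1.
Proof.
elim: n => [|n IH] /=; first by rewrite muln0 expn0.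
by rewrite mulnDr addnAC IH /= expnS.
Qed.

Lemma cnt_min a m n N : 0 < a -> sa a n <= m < sa a n.+1 -> cntf a m N = minn N n.
Proof.
move=> ha /andP[h1 h2]; elim: N => [|N IH] /=; first by rewrite min0n.
rewrite IH.
case: (ltnP N n) => hN.
- have : sa a N.+1 <= m by apply: leq_trans (@sa_mono a _ _ hN) h1.
  rewrite -subn_eq0 => /eqP ->.
  by rewrite subn0 addn1; symmetry; apply/minn_idPl.
- have : m < sa a N.+1 by exact: leq_trans h2 (@sa_mono a n.+1 N.+1 hN).
  rewrite -subn_gt0 /= => hp.
  have -> : 1 - (sa a N + a ^ N - m) = 0 by apply/eqP; rewrite subn_eq0.
  by rewrite addn0; symmetry; apply/minn_idPr/(leq_trans hN).
Qed.

Lemma blk_eq a n i : 0 < a -> i < a ^ n -> cntf a (sa a n + i) (sa a n + i).+1 = n.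
Proof.
move=> ha hi; rewrite (@cnt_min a _ n) //.
- apply/minn_idPr; apply: leq_trans (sa_ge a n ha) _.
  by apply: leqW; rewrite leq_addr.
- by rewrite leq_addr /= ltn_add2l.
Qed.

Lemma Phi1_block g a n i : 0 < a -> i < a ^ n ->
  den g (cPhi1 a) (sa a n + i) = 1 - odd (g n %/ 2 ^ i).
Proof.
by move=> ha hi; rewrite den_Phi1 blk_eq // addKn.
Qed.

Lemma count_block (Z : nat -> bool) a n : 
  (forall i, i < a ^ n -> Z (sa a n + i) = false) ->
  count Z (iota 0 (sa a n.+1)) <= sa a n.
Proof.
move=> hZ; rewrite /= iotaD count_cat add0n.
have -> : count Z (iota (sa a n) (a ^ n)) = 0.
  apply/eqP; rewrite -leqn0 leqNgt -has_count; apply/hasPn => j.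
  rewrite mem_iota => /andP[h1 h2].
  by rewrite -(subnKC h1) hZ // -(ltn_add2l (sa a n)) subnKC.
by rewrite addn0 (leq_trans (count_size _ _)) // size_iota.
Qed.

From mathcomp Require Import ereal topology normedtype sequences.
From mathcomp Require Import Rstruct Rstruct_topology.

Section Dens.
Local Open Scope ring_scope.
Lemma dens_le (Z : nat -> bool) (p : Rdefinitions.R) :
  (forall N, exists n, (N <= n)%N /\ (count Z (iota 0 n))%:R / n%:R <= p) ->
  (lower_density Z <= p%:E)%E.
Proof.
move=> H; rewrite /lower_density limn_einf_lim.
apply: lime_le; first exact: is_cvg_einfs.
apply: nearW => N.
have [n [Nn hn]] := H N.
apply: (@le_trans _ _ ((count Z (iota 0 n))%:R / n%:R)%:E); last by rewrite lee_fin.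
by apply: ereal_inf_lbound; exists n => //=.
Qed.

Lemma ratio_le (c S a : nat) : (0 < a)%N -> (0 < S)%N -> (c * a <= S)%N ->
  (c%:R / S%:R : Rdefinitions.R) <= 1 / a%:R.
Proof.
move=> ha hS h.
rewrite ler_pdivrMr ?ltr0n // mul1r mulrC ler_pdivlMr ?ltr0n //.
by rewrite -natrM ler_nat.
Qed.

End Dens.

Lemma dens_blocks a (ha : (0 < a)%N) (u v : nat -> nat) :
  (forall N, exists n, (N <= n)%N /\ forall i, (i < a ^ n)%N -> u (sa a n + i) != v (sa a n + i)) ->
  (lower_density (agree u v) <= (1 / a%:R)%:E)%E.
Proof.
move=> H; apply: dens_le => N.
have [n [Nn hn]] := H N.
exists (sa a n.+1); split.
  apply: leq_trans (sa_ge a n.+1 ha); exact: leqW.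
apply: ratio_le => //.
  by apply: leq_trans (sa_ge a n.+1 ha).
apply: leq_trans (_ : sa a n * a <= _)%N.
  rewrite leq_mul2r; apply/orP; right; apply: count_block => i hi.
  by rewrite /agree; apply/negbTE; exact: hn.
by rewrite -saS mulnC leq_addr.
Qed.

Lemma flip_ne b : (b < 2)%N -> (1 - b != b)%N.
Proof. by case: b => [|[|]]. Qed.

Theorem mainTheorem5 (a : nat) (ha : (0 < a)%N) :
  let h := fun n : nat => (2 ^ (a ^ n))%N in
  strong_le (massD (1 / a%:R)%R) (IOE h) /\
  strong_le (AED h) (massB (1 / a%:R)%R).
Proof.
move=> h; split.
- exists (cPhi1 a) => y hy; exists (den y (cPhi1 a)); split.
    by move=> n; apply: den_eval; exact: mf_Phi1.
  split.
    by move=> n; rewrite den_Phi1; case: odd.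
  move=> x [cx hcx] xbit.
  pose x' := den x (cPhi2 a).
  have cx' : computable x'.
    by exists (osub (cPhi2 a) cx) => n; apply: osub_eval => //; exact: mf_Phi2.
  have bx' : forall n, (x' n < h n)%N.
    by move=> n; rewrite /x' den_Phi2; apply: enc_bound.
  have := hy x' cx' bx'.
  move=> hio; apply: dens_blocks => // N.
  have [n [Nn e]] := hio N.
  exists n; split => // i hi.
  rewrite Phi1_block // -e /x' den_Phi2 enc_bit //.
  by rewrite eq_sym flip_ne.
- exists (cPhi2 a) => z [zbit hz]; exists (den z (cPhi2 a)); split.
    by move=> n; apply: den_eval; exact: mf_Phi2.
  split.
    by move=> n; rewrite den_Phi2; apply: enc_bound.
  move=> x [cx hcx].
  pose w := den x (cPhi1 a).
  have cw : computable w.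
    by exists (osub (cPhi1 a) cx) => n; apply: osub_eval => //; exact: mf_Phi1.
  have bw : bitseq_fun w by move=> n; rewrite /w den_Phi1; case: odd.
  have := hz w cw bw.
  move=> hlt; apply: contrapT => hne; move: hlt; apply/negP; rewrite -leNgt.
  apply: dens_blocks => // N.
  have [n hn] : exists n, (N <= n)%N /\ x n = den z (cPhi2 a) n.
    apply: contrapT => hn; apply: hne; exists N => n Nn e; apply: hn; by exists n.
  exists n; split; first by case: hn.
  move=> i hi; rewrite /w Phi1_block // (proj2 hn) den_Phi2 enc_bit //.
  by rewrite flip_ne.
Qed.
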